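(* Let $k\ge0$, $T\in\mathcal T_h$, and let $\mathrm s_T$ be a bilinear form on $\underline U_T^k$ satisfying (S1)–(S3) and depending on its arguments only through the residuals $\delta_T^k$ and $(\delta_{TF}^k)_{F\in\mathcal F_T}$, i.e. $\mathrm s_T(\underline u_T,\underline v_T)=\mathrm s_T(\underline u_T',\underline v_T')$ whenever $\delta_T^k\underline u_T=\delta_T^k\underline u_T'$, $\delta_{TF}^k\underline u_T=\delta_{TF}^k\underline u_T'$, $\delta_T^k\underline v_T=\delta_T^k\underline v_T'$, $\delta_{TF}^k\underline v_T=\delta_{TF}^k\underline v_T'$ for all $F\in\mathcal F_T$. Then for all $\underline u_T,\underline v_T\in\underline U_T^k$, $$\mathrm s_T(\underline u_T,\underline v_T)=\mathrm s_T\big((0,\Delta_{\partial T}^k\underline u_T),(0,\Delta_{\partial T}^k\underline v_T)\big).$$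
   Context: $T$ is an element (open polytope) of a polytopal mesh of a bounded polyhedral domain $\Omega\subset\mathbb R^d$, $\mathcal F_T$ the set of its (planar) faces, $\vec n_{TF}$ the unit normal to $F$ pointing out of $T$, $h_T,h_F$ diameters. $\mathbb P^l(X)$: polynomials of total degree $\le l$ on $X$; $(\cdot,\cdot)_X$, $\|\cdot\|_X$: $L^2(X)$ product and norm; $\pi_X^{0,l}$: $L^2(X)$-orthogonal projector onto $\mathbb P^l(X)$. $\underline U_T^k:=\mathbb P^k(T)\times\prod_{F\in\mathcal F_T}\mathbb P^k(F)$ with elements $\underline v_T=(v_T,(v_F)_{F\in\mathcal F_T})$; $\|\underline v_T\|_{1,T}^2:=\|\nabla v_T\|_T^2+\sum_Fh_F^{-1}\|v_F-v_T\|_F^2$; $\underline I_T^kv:=(\pi_T^{0,k}v,(\pi_F^{0,k}v|_F)_F)$. $p_T^{k+1}:\underline U_T^k\to\mathbb P^{k+1}(T)$ is defined by $(\nabla p_T^{k+1}\underline v_T,\nabla w)_T=-(v_T,\Delta w)_T+\sum_F(v_F,\nabla w\cdot\vec n_{TF})_F$ for all $w\in\mathbb P^{k+1}(T)$ and $(p_T^{k+1}\underline v_T-v_T,1)_T=0$. $\mathrm a_T(\underline u_T,\underline v_T):=(\nabla p_T^{k+1}\underline u_T,\nabla p_T^{k+1}\underline v_T)_T+\mathrm s_T(\underline u_T,\underline v_T)$. (S1) $\mathrm s_T$ symmetric positive semidefinite; (S2) there is $\eta>0$ with $\eta^{-1}\|\underline v_T\|_{1,T}^2\le\mathrm a_T(\underline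 v_T,\underline v_T)\le\eta\|\underline v_T\|_{1,T}^2$ for all $\underline v_T$; (S3) $\mathrm s_T(\underline I_T^kw,\underline v_T)=0$ for all $w\in\mathbb P^{k+1}(T)$, $\underline v_T\in\underline U_T^k$. Residuals: $\delta_T^k\underline v_T:=\pi_T^{0,k}(p_T^{k+1}\underline v_T-v_T)$ and $\delta_{TF}^k\underline v_T:=\pi_F^{0,k}(p_T^{k+1}\underline v_T-v_F)$ for $F\in\mathcal F_T$. Boundary difference operator $\Delta_{\partial T}^k:\underline U_T^k\to\prod_{F\in\mathcal F_T}\mathbb P^k(F)$, $\Delta_{\partial T}^k\underline v_T:=(v_F-v_T|_F)_{F\in\mathcal F_T}$; $(0,\Delta_{\partial T}^k\underline v_T)$ denotes the element of $\underline U_T^k$ with element component $0$ and face components $v_F-v_T|_F$. *)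

(* Defs.v *)
From HB Require Import structures.
From mathcomp Require Import all_boot all_order all_algebra.
From mathcomp Require Import all_classical all_reals all_analysis.
Set Implicit Arguments. Unset Strict Implicit. Unset Printing Implicit Defensive.
Import Order.TTheory GRing.Theory Num.Theory.
Import numFieldNormedType.Exports.
Local Open Scope classical_set_scope.
Local Open Scope ring_scope.

Definition edot {R : realType} {m : nat} (x y : 'rV[R]_m) : R :=
  \sum_(i < m) x 0 i * y 0 i.
Definition enorm {R : realType} {m : nat} (x : 'rV[R]_m) : R :=
  Num.sqrt (edot x x).
Definition diam {R : realType} {m : nat} (S : set 'rV[R]_m) : R :=
  sup [set enorm (x - y) | x in S & y in S].

(* ---------- Lebesgue integral on R^m, as iterated 1D Lebesgue integrals
   (coincides with the m-dimensional Lebesgue integral for integrable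
   functions, by Fubini) ---------- *)
Fixpoint iint {R : realType} (m : nat) : ('rV[R]_m -> R) -> R :=
  match m with
  | 0 => fun f => f 0
  | m'.+1 => fun f =>
      Rintegral (@lebesgue_measure R) [set: R]
        (fun t : R => iint (fun y : 'rV[R]_m' => f (row_mx (t%:M : 'rV[R]_1) y)))
  end.

Definition poly_fun {R : realType} (m l : nat) (f : 'rV[R]_m -> R) : Prop :=
  exists c : {ffun {ffun 'I_m -> 'I_l.+1} -> R},
    forall x, f x = \sum_(al : {ffun 'I_m -> 'I_l.+1} | (\sum_i (al i : nat) <= l)%N)
                      c al * \prod_(i < m) x 0 i ^+ al i.

Definition evec {R : realType} {m : nat} (i : 'I_m) : 'rV[R]_m := delta_mx 0 i.
Definition partial {R : realType} {m : nat} (i : 'I_m) (f : 'rV[R]_m -> R)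
  : 'rV[R]_m -> R := fun x => derive f x (evec i).
Definition grad {R : realType} {m : nat} (f : 'rV[R]_m -> R) (x : 'rV[R]_m)
  : 'rV[R]_m := \row_i partial i f x.
Definition lap {R : realType} {m : nat} (f : 'rV[R]_m -> R) (x : 'rV[R]_m) : R :=
  \sum_(i < m) partial i (partial i f) x.

(* ---------- a polytopal element T with its faces ----------
   Face i is a subset [fset i] of the affine hyperplane
   { forig i + y *m fframe i | y in R^(d-1) }, where the rows of [fframe i]
   are orthonormal and [fnormal i] is a unit normal to the hyperplane. *)
Record element (R : realType) (d : nat) := Element {
  cell : set 'rV[R]_d;
  nf : nat;
  forig : 'I_nf -> 'rV[R]_d;
  fframe : 'I_nf -> 'M[R]_(d.-1, d);
  fnormal : 'I_nf -> 'rV[R]_d;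
  fset : 'I_nf -> set 'rV[R]_d
}.
Arguments cell {R d} e _.
Arguments nf {R d} e.
Arguments forig {R d} e i.
Arguments fframe {R d} e i.
Arguments fnormal {R d} e i.
Arguments fset {R d} e i _.

Section Element.
Context {R : realType} {d : nat} (E : element R d).
Local Notation pt := 'rV[R]_d.
Local Notation T := (cell E).
Local Notation F := (fset E).

Definition fplane (i : 'I_(nf E)) : set pt :=
  [set forig E i + y *m fframe E i | y in [set: 'rV[R]_d.-1]].

Definition frelint (i : 'I_(nf E)) : set pt :=
  [set x | exists2 e : R, 0 < e &
     forall y : 'rV[R]_d.-1, enorm y < e -> F i (x + y *m fframe E i)].

Definition polytopal_element : Prop :=
  (0 < d)%N /\
  [/\ [/\ open T, T !=set0, connected T &
          exists M : R, forall x, T x -> enorm x <= M],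
      forall i, [/\ fframe E i *m (fframe E i)^T = 1%:M,
                    fframe E i *m (fnormal E i)^T = 0,
                    edot (fnormal E i) (fnormal E i) = 1 &
                    [/\ F i `<=` fplane i, closed (F i), connected (F i) &
                        frelint i !=set0]],
      closure T `\` T = \bigcup_(i in [set: 'I_(nf E)]) F i,
      (forall i j, i != j -> frelint i `&` frelint j = set0) &
      (forall i x, frelint i x -> exists2 e : R, 0 < e &
         forall y, enorm (y - x) < e ->
           (T y <-> edot (y - x) (fnormal E i) < 0))].

(* L^2 products on T and on a face F (w.r.t. the (d-1)-dim. surface measure,
   realised through the isometric parametrisation of the face hyperplane) *)
Definition intT (f : pt -> R) : R := iint (fun x => \1_T x * f x).
Definition intF (i : 'I_(nf E)) (f : pt -> R) : R :=
  iint (fun y : 'rV[R]_d.-1 =>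
          let x := forig E i + y *m fframe E i in \1_(F i) x * f x).

Definition hT : R := diam T.
Definition hF (i : 'I_(nf E)) : R := diam (F i).

(* L^2-orthogonal projectors; elements of P^l(X) are represented by
   polynomial functions on R^d, and are only meaningful on X. *)
Definition is_projT (l : nat) (f g : pt -> R) : Prop :=
  poly_fun l g /\ forall q, poly_fun l q -> intT (fun x => (f x - g x) * q x) = 0.
Definition is_projF (i : 'I_(nf E)) (l : nat) (f g : pt -> R) : Prop :=
  poly_fun l g /\ forall q, poly_fun l q -> intF i (fun x => (f x - g x) * q x) = 0.
Definition projT (l : nat) (f : pt -> R) : pt -> R :=
  xget (fun _ => 0) [set g | is_projT l f g].
Definition projF (i : 'I_(nf E)) (l : nat) (f : pt -> R) : pt -> R :=
  xget (fun _ => 0) [set g | is_projF i l f g].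

(* The HHO space U_T^k: pairs (v_T, (v_F)_F); face components are represented
   by polynomial functions on R^d, only their values on F matter. *)
Definition hho : Type := ((pt -> R) * ('I_(nf E) -> pt -> R))%type.
Definition inU (k : nat) (v : hho) : Prop :=
  poly_fun k v.1 /\ forall i, poly_fun k (v.2 i).
Definition hho_add (u v : hho) : hho :=
  (fun x => u.1 x + v.1 x, fun i x => u.2 i x + v.2 i x).
Definition hho_scale (a : R) (u : hho) : hho :=
  (fun x => a * u.1 x, fun i x => a * u.2 i x).

Definition interp (k : nat) (v : pt -> R) : hho :=
  (projT k v, fun i => projF i k v).

Definition is_pT (k : nat) (v : hho) (p : pt -> R) : Prop :=
  [/\ poly_fun k.+1 p,
      forall w, poly_fun k.+1 w ->
        intT (fun x => edot (grad p x) (grad w x)) =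
        - intT (fun x => v.1 x * lap w x)
        + \sum_(i < nf E) intF i (fun x => v.2 i x * edot (grad w x) (fnormal E i)) &
      intT (fun x => p x - v.1 x) = 0].
Definition pT (k : nat) (v : hho) : pt -> R := xget (fun _ => 0) [set p | is_pT k v p].

Definition deltaT (k : nat) (v : hho) : pt -> R :=
  projT k (fun x => pT k v x - v.1 x).
Definition deltaTF (k : nat) (i : 'I_(nf E)) (v : hho) : pt -> R :=
  projF i k (fun x => pT k v x - v.2 i x).

Definition bdiff (v : hho) : 'I_(nf E) -> pt -> R := fun i x => v.2 i x - v.1 x.
Definition zero_bdiff (v : hho) : hho := (fun _ => 0, bdiff v).

Definition norm1T_sq (v : hho) : R :=
  intT (fun x => edot (grad v.1 x) (grad v.1 x)) +
  \sum_(i < nf E) (hF i)^-1 * intF i (fun x => (v.2 i x - v.1 x) ^+ 2).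

Definition aT (k : nat) (s : hho -> hho -> R) (u v : hho) : R :=
  intT (fun x => edot (grad (pT k u) x) (grad (pT k v) x)) + s u v.

Definition bilinear_on (k : nat) (s : hho -> hho -> R) : Prop :=
  (forall a u u' v, inU k u -> inU k u' -> inU k v ->
     s (hho_add (hho_scale a u) u') v = a * s u v + s u' v) /\
  (forall a u v v', inU k u -> inU k v -> inU k v' ->
     s u (hho_add (hho_scale a v) v') = a * s u v + s u v').

Definition S1 (k : nat) (s : hho -> hho -> R) : Prop :=
  (forall u v, inU k u -> inU k v -> s u v = s v u) /\
  (forall v, inU k v -> 0 <= s v v).
Definition S2 (k : nat) (s : hho -> hho -> R) : Prop :=
  exists2 eta : R, 0 < eta & forall v, inU k v ->
    eta^-1 * norm1T_sq v <= aT k s v v /\ aT k s v v <= eta * norm1T_sq v.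
Definition S3 (k : nat) (s : hho -> hho -> R) : Prop :=
  forall w v, poly_fun k.+1 w -> inU k v -> s (interp k w) v = 0.

Definition same_residuals (k : nat) (u u' : hho) : Prop :=
  (forall x, T x -> deltaT k u x = deltaT k u' x) /\
  (forall i x, F i x -> deltaTF k i u x = deltaTF k i u' x).
Definition residual_dependent (k : nat) (s : hho -> hho -> R) : Prop :=
  forall u u' v v', inU k u -> inU k u' -> inU k v -> inU k v' ->
    same_residuals k u u' -> same_residuals k v v' -> s u v = s u' v'.

End Element.

(* Main.v *)
Require Import Defs.
From HB Require Import structures.
From mathcomp Require Import all_boot all_order all_algebra.
From mathcomp Require Import all_classical all_reals all_analysis.
Import Order.TTheory GRing.Theory Num.Theory.
Import numFieldNormedType.Exports.
Local Open Scope classical_set_scope.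
Local Open Scope ring_scope.
From mathcomp Require Import ring lra.

Section S.
Variable R : realType.
Local Notation leb := (@lebesgue_measure R).

Lemma nn_mono (f g : R -> \bar R) : (forall x, (0 <= f x)%E) ->
  (forall x, (f x <= g x)%E) ->
  (\int[leb]_x f x <= \int[leb]_x g x)%E.
Proof.
move=> f0 fg; have g0 x : (0 <= g x)%E by apply: le_trans (f0 x) (fg x).
rewrite !ge0_integralTE //; apply: ereal_sup_le => _ [h hf <-].
by exists h => //= x; exact: le_trans (hf x) (fg x).
Qed.

Lemma int_indic (c a b : R) : 0 <= c -> a <= b ->
  (\int[leb]_x (c * \1_(`[a, b]%classic) x)%:E = (c * (b - a))%:E)%E.
Proof.
move=> c0 ab.
have := @integralZl_indic _ _ _ leb setT measurableT (fun _ => `[a, b]%classic) c.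
move=> /(_ _ _) ->; last 2 first.
- by move=> /lt_le_trans /(_ c0); rewrite ltxx.
- by [].
rewrite integral_indic // setIT.
have H := lebesgue_measure_itv `[a, b].
rewrite /= H /=.
case: ifPn => [_|]; first by rewrite -EFinM.
rewrite lte_fin -leNgt => ba; have -> : b = a by apply/eqP; rewrite eq_le ab ba.
by rewrite subrr mulr0 mule0.
Qed.

Lemma R1 (g : R -> R) (K L c a del : R) : 0 <= c -> 0 <= del -> 0 <= L ->
  (forall t, 0 <= g t) -> (forall t, g t <= K) ->
  (forall t, L < `|t| -> g t = 0) ->
  (forall t, a <= t <= a + del -> c <= g t) ->
  c * del <= Rintegral leb setT g <= K * (L *+ 2).
Proof.
move=> c0 d0 L0 g0 gK gL gc.
have K0 : 0 <= K by apply: le_trans (g0 0) (gK 0).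
have lo : ((c * del)%:E <= \int[leb]_x (g x)%:E)%E.
  have aa : a <= a + del by rewrite lerDl.
  have E := int_indic c a (a + del) c0 aa.
  rewrite addrAC subrr add0r in E; rewrite -E.
  apply: nn_mono => x; first by rewrite lee_fin mulr_ge0 // indicE.
  rewrite lee_fin indicE; have [xin|_] := boolP (x \in _); last by rewrite mulr0.
  by move: xin; rewrite mulr1 inE /= in_itv /= => /gc.
have hi : (\int[leb]_x (g x)%:E <= (K * (L *+ 2))%:E)%E.
  have LL : - L <= L by rewrite -subr_ge0 opprK -mulr2n mulrn_wge0.
  have E := int_indic K (- L) L K0 LL.
  rewrite opprK -mulr2n in E; rewrite -E.
  apply: nn_mono => x; first by rewrite lee_fin.
  rewrite lee_fin indicE; have [xin|xnin] := boolP (x \in _).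
    by rewrite mulr1.
  move: xnin; rewrite mulr0 => /negP; rewrite inE /= in_itv /= -ler_norml => /negP.
  by rewrite -ltNge => /gL ->.
have f0 : (0 <= \int[leb]_x (g x)%:E)%E.
  by apply: le_trans lo; rewrite lee_fin mulr_ge0.
rewrite /Rintegral; apply/andP; split.
  by rewrite -lee_fin fineK // ge0_fin_numE // (le_lt_trans hi) // ltry.
by rewrite -lee_fin fineK // ge0_fin_numE // (le_lt_trans hi) // ltry.
Qed.

Lemma rowE1 m (t : R) (y : 'rV[R]_m) :
  (row_mx (t%:M : 'rV[R]_1) y) 0 (lshift m (ord0 : 'I_1)) = t.
Proof. by rewrite row_mxEl mxE eqxx mulr1n. Qed.

Lemma rowE2 m (t : R) (y : 'rV[R]_m) j :
  (row_mx (t%:M : 'rV[R]_1) y) 0 (rshift 1 j) = y 0 j.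
Proof. by rewrite row_mxEr. Qed.

Lemma ordS_split m (P : 'I_(1 + m) -> Prop) :
  (P (lshift m (ord0 : 'I_1))) -> (forall j, P (rshift 1 j)) -> forall i, P i.
Proof.
move=> h1 h2 i; rewrite -[i]splitK; case: (fintype.split i) => [j|j] /=.
  by rewrite (ord1 j).
exact: h2.
Qed.

Lemma iint_bounds m (f : 'rV[R]_m -> R) (K L c del : R) (a : 'I_m -> R) :
  0 <= c -> 0 <= del -> 0 <= L ->
  (forall x, 0 <= f x) -> (forall x, f x <= K) ->
  (forall x : 'rV[R]_m, (exists i, L < `|x 0 i|) -> f x = 0) ->
  (forall x : 'rV[R]_m, (forall i, a i <= x 0 i <= a i + del) -> c <= f x) ->
  c * del ^+ m <= iint f <= K * (L *+ 2) ^+ m.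
Proof.
elim: m f K c a => [|m IH] f K c a c0 d0 L0 f0 fK fL fc.
  by rewrite /= !expr0 !mulr1 fK fc // => -[].
rewrite /=.
pose g t := iint (fun y : 'rV[R]_m => f (row_mx (t%:M : 'rV[R]_1) y)).
have gb t c' a' : 0 <= c' ->
    (forall y : 'rV[R]_m, (forall i, a' i <= y 0 i <= a' i + del) ->
       c' <= f (row_mx (t%:M : 'rV[R]_1) y)) ->
    c' * del ^+ m <= g t <= K * (L *+ 2) ^+ m.
  move=> c'0 h; apply: (IH _ _ _ a') => // y [j Hj]; apply: fL.
  by exists (rshift 1 j); rewrite rowE2.
have g0 t : 0 <= g t.
  by have /andP[+ _] := gb t 0 (fun _ => 0) (lexx _) (fun y _ => f0 _); rewrite mul0r.
have gK t : g t <= K * (L *+ 2) ^+ m.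
  by have /andP[_ +] := gb t 0 (fun _ => 0) (lexx _) (fun y _ => f0 _).
have gz t : L < `|t| -> g t = 0.
  move=> Lt.
  have fz y : f (row_mx (t%:M : 'rV[R]_1) y) = 0.
    by apply: fL; exists (lshift m (ord0 : 'I_1)); rewrite rowE1.
  have p1 y : 0 <= f (row_mx (t%:M : 'rV[R]_1) y) by rewrite fz.
  have p2 y : f (row_mx (t%:M : 'rV[R]_1) y) <= 0 by rewrite fz.
  have /andP[] := IH (fun y : 'rV[R]_m => f (row_mx (t%:M : 'rV[R]_1) y)) 0 0
    (fun _ => 0) (lexx _) d0 L0 p1 p2 (fun y _ => fz y) (fun y _ => p1 y).
  rewrite mul0r /g => ? ?; apply/eqP; rewrite eq_le; apply/andP; split => //.
  by rewrite -(mul0r ((L *+ 2) ^+ m)).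
have := @R1 g (K * (L *+ 2) ^+ m) L (c * del ^+ m) (a (lshift m (ord0 : 'I_1))) del
  (mulr_ge0 c0 (exprn_ge0 m d0)) d0 L0 g0
  gK gz.
rewrite -mulrA -exprSr -mulrA -exprSr; apply => t Ht.
have H : forall y : 'rV[R]_m, (forall i, a (rshift 1 i) <= y 0 i <= a (rshift 1 i) + del) ->
   c <= f (row_mx (t%:M : 'rV[R]_1) y).
  move=> y Hy; apply: fc; apply: ordS_split; first by rewrite rowE1.
  by move=> j; rewrite rowE2.
by case/andP: (gb t c _ c0 H).
Qed.
End S.

Section S.
Variable R : realType.

Lemma nbhs_box m (A : set 'rV[R]_m) (x : 'rV[R]_m) : nbhs x A ->
  exists2 r : R, 0 < r & forall y : 'rV[R]_m, (forall i, `|y 0 i - x 0 i| <= r) -> A y.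
Proof.
move=> /nbhs_ballP [e e0 he]; exists (e / 2); first by rewrite divr_gt0.
move=> y hy; apply: he.
split => // i j; rewrite (ord1 i) -ball_normE /= distrC.
apply: le_lt_trans (hy j) _; rewrite ltr_pdivrMr // ltr_pMr // ltr1n //.
Qed.

Lemma open_box m (A : set 'rV[R]_m) (x : 'rV[R]_m) : open A -> A x ->
  exists2 r : R, 0 < r & forall y : 'rV[R]_m, (forall i, `|y 0 i - x 0 i| <= r) -> A y.
Proof. by move=> oA Ax; apply: nbhs_box; apply: open_nbhs_nbhs. Qed.

Lemma cont_box m (g : 'rV[R]_m -> R) (x : 'rV[R]_m) e : {for x, continuous g} -> 0 < e ->
  exists2 r : R, 0 < r & forall y : 'rV[R]_m, (forall i, `|y 0 i - x 0 i| <= r) ->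
     `|g y - g x| < e.
Proof.
move=> /cvgrPdist_lt /(_ e) H e0; have := H e0.
move=> /nbhs_box [r r0 hr]; exists r => // y /hr; by rewrite distrC.
Qed.



Section cont.
Context {T : topologicalType}.

Lemma cont_sum (I : Type) (r : seq I) (P : pred I) (F : I -> T -> R) x :
  (forall i, {for x, continuous (F i)}) ->
  {for x, continuous (fun t => \sum_(i <- r | P i) F i t)}.
Proof.
move=> hF; elim: r => [|a r IH].
  have -> : (fun t => \sum_(i <- [::] | P i) F i t) = (fun=> 0).
    by apply/funext => t; rewrite big_nil.
  exact: cst_continuous.
have -> : (fun t => \sum_(i <- a :: r | P i) F i t) =
    ((fun t => if P a then F a t else 0) + (fun t => \sum_(i <- r | P i) F i t)).
  by apply/funext => t; rewrite big_cons /=; case: (P a); rewrite ?add0r.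
apply: continuousD => //; case: (P a) => //; exact: cst_continuous.
Qed.

Lemma cont_prod (I : Type) (r : seq I) (P : pred I) (F : I -> T -> R) x :
  (forall i, {for x, continuous (F i)}) ->
  {for x, continuous (fun t => \prod_(i <- r | P i) F i t)}.
Proof.
move=> hF; elim: r => [|a r IH].
  have -> : (fun t => \prod_(i <- [::] | P i) F i t) = (fun=> 1).
    by apply/funext => t; rewrite big_nil.
  exact: cst_continuous.
have -> : (fun t => \prod_(i <- a :: r | P i) F i t) =
    ((fun t => if P a then F a t else 1) \* (fun t => \prod_(i <- r | P i) F i t)).
  by apply/funext => t; rewrite big_cons /=; case: (P a); rewrite ?mul1r.
apply: continuousM => //; case: (P a) => //; exact: cst_continuous.
Qed.

Lemma cont_exp (F : T -> R) x n : {for x, continuous F} ->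
  {for x, continuous (fun t => F t ^+ n)}.
Proof.
move=> hF; elim: n => [|n IH].
  have -> : (fun t => F t ^+ 0) = (fun=> 1) by apply/funext => t; rewrite expr0.
  exact: cst_continuous.
have -> : (fun t => F t ^+ n.+1) = (F \* (fun t => F t ^+ n)).
  by apply/funext => t; rewrite exprS.
exact: continuousM.
Qed.

Lemma poly_comp_cont m l (h : T -> 'rV[R]_m) (q : 'rV[R]_m -> R) x :
  (forall i, {for x, continuous (fun t => h t 0 i)}) -> poly_fun l q ->
  {for x, continuous (fun t => q (h t))}.
Proof.
move=> hc [c qE].
have -> : (fun t => q (h t)) = (fun t => \sum_(al : {ffun 'I_m -> 'I_l.+1} |
    (\sum_i (al i : nat) <= l)%N) (fun t => c al * \prod_(i < m) h t 0 i ^+ al i) t).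
  by apply/funext => t; rewrite qE.
apply: cont_sum => al.
apply: (@continuousM R T (fun=> c al) (fun t => \prod_(i < m) h t 0 i ^+ al i) x
  (@cst_continuous T R (c al) x)).
apply: cont_prod => i; exact: cont_exp.
Qed.
End cont.

Lemma poly_bound m l (q : 'rV[R]_m -> R) B : poly_fun l q -> 0 <= B ->
  exists K : R, forall x : 'rV[R]_m, (forall i, `|x 0 i| <= B) -> `|q x| <= K.
Proof.
move=> [c qE] B0.
exists (\sum_(al : {ffun 'I_m -> 'I_l.+1} | (\sum_i (al i : nat) <= l)%N)
   `|c al| * \prod_(i < m) B ^+ al i) => x hx.
rewrite qE; apply: le_trans (ler_norm_sum _ _ _) _; apply: ler_sum => al _.
rewrite normrM normr_prod; apply: ler_wpM2l => //; apply: ler_prod => i _.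
by rewrite normrX exprn_ge0 //= lerXn2r // nnegrE.
Qed.

Lemma poly_line m l (q : 'rV[R]_m -> R) (A B : 'rV[R]_m) : poly_fun l q ->
  exists P : {poly R}, forall t, q (A + t *: B) = P.[t].
Proof.
move=> [c qE].
exists (\sum_(al : {ffun 'I_m -> 'I_l.+1} | (\sum_i (al i : nat) <= l)%N)
   c al *: \prod_(i < m) ((A 0 i)%:P + B 0 i *: 'X) ^+ al i) => t.
rewrite qE horner_sum; apply: eq_bigr => al _.
rewrite hornerZ horner_prod; congr (_ * _); apply: eq_bigr => i _.
by rewrite horner_exp hornerD hornerC hornerZ hornerX !mxE mulrC.
Qed.
End S.

Section S.
Variable R : realType.

Lemma iint_sq_pos m (S : set 'rV[R]_m) (p : 'rV[R]_m -> R) (B K : R) (z : 'rV[R]_m) :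
  0 <= B ->
  (forall y, S y -> forall i, `|y 0 i| <= B) ->
  (forall y, S y -> `|p y| <= K) ->
  {for z, continuous p} -> p z != 0 ->
  (exists2 r : R, 0 < r & forall y : 'rV[R]_m, (forall i, `|y 0 i - z 0 i| <= r) -> S y) ->
  0 < iint (fun y => \1_S y * (p y * p y)).
Proof.
move=> B0 SB pK pc pz [r2 r20 hr2].
pose e := `|p z| / 2.
have e0 : 0 < e by rewrite divr_gt0 // normr_gt0.
have [r1 r10 hr1] := @cont_box R _ p z e pc e0.
pose r := Num.min r1 r2.
have r0 : 0 < r by rewrite lt_min r10 r20.
have K0 : 0 <= K by apply: le_trans (pK z (hr2 z _)) => // i; rewrite subrr normr0 ltW.
have := @iint_bounds R m (fun y => \1_S y * (p y * p y)) (K * K) B (e * e) (r *+ 2)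
  (fun i => z 0 i - r) (mulr_ge0 (ltW e0) (ltW e0)) (mulrn_wge0 _ (ltW r0)) B0.
case/(_ _ _ _ _)/andP.
- move=> y; rewrite indicE; case: (y \in S); rewrite ?mul1r ?mul0r //.
  by rewrite -expr2 sqr_ge0.
- move=> y; rewrite indicE; have [Sy|nSy] := boolP (y \in S); last first.
    by rewrite mul0r mulr_ge0.
  rewrite mul1r; apply: le_trans (ler_norm _) _; rewrite normrM.
  have := pK y (set_mem Sy) => h; apply: ler_pM => //.
- move=> y [i Bi]; rewrite indicE; have [Sy|nSy] := boolP (y \in S).
    by have := SB y (set_mem Sy) i; rewrite leNgt Bi.
  by rewrite mul0r.
- move=> y hy.
  have hyz i : `|y 0 i - z 0 i| <= r.
    have /andP[h1 h2] := hy i; rewrite ler_norml; apply/andP; split; lra.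
  have rr2 : r <= r2 by rewrite ge_min lexx orbT.
  have rr1 : r <= r1 by rewrite ge_min lexx.
  have Sy : S y by apply: hr2 => i; apply: le_trans (hyz i) rr2.
  rewrite indicE mem_set // mul1r.
  have hp := hr1 y (fun i => le_trans (hyz i) rr1).
  have h1 := ler_normD (p y) (p z - p y).
  rewrite addrC subrK distrC in h1.
  have ee : `|p z| = e * 2 by rewrite /e divfK.
  have ey : e <= `|p y| by clearbody e; lra.
  rewrite -[p y * p y]ger0_norm ?normrM; last by rewrite -expr2 sqr_ge0.
  by apply: ler_pM => //; apply: ltW.
move=> h _; apply: lt_le_trans h.
by rewrite mulr_gt0 ?exprn_gt0 ?mulrn_wgt0 // mulr_gt0.
Qed.
End S.

Section S.
Variable R : realType.

Lemma poly_funB m l (f g : 'rV[R]_m -> R) : poly_fun l f -> poly_fun l g ->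
  poly_fun l (fun x => f x - g x).
Proof.
move=> [cf fE] [cg gE]; exists [ffun al => cf al - cg al] => x.
rewrite fE gE -sumrB; apply: eq_bigr => al _; by rewrite ffunE mulrBl.
Qed.

Lemma poly_fun0 m l : poly_fun l (fun _ : 'rV[R]_m => 0).
Proof. by exists [ffun _ => 0] => x; rewrite big1 // => al _; rewrite ffunE mul0r. Qed.

Lemma poly_funS m l (f : 'rV[R]_m -> R) : poly_fun l f -> poly_fun l.+1 f.
Proof.
move=> [c fE].
pose h (al : {ffun 'I_m -> 'I_l.+1}) : {ffun 'I_m -> 'I_l.+2} :=
  [ffun i => widen_ord (leqnSn _) (al i)].
pose h' (al : {ffun 'I_m -> 'I_l.+2}) : {ffun 'I_m -> 'I_l.+1} :=
  [ffun i => inord (al i)].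
exists [ffun al : {ffun 'I_m -> 'I_l.+2} => if (\sum_i (al i : nat) <= l)%N then c (h' al) else 0] => x.
rewrite fE.
rewrite (bigID (fun al : {ffun 'I_m -> 'I_l.+2} => (\sum_i (al i : nat) <= l)%N)) /=.
rewrite [X in _ = _ + X]big1 ?addr0; last first.
  by move=> al /andP[_ /negbTE H]; rewrite ffunE H mul0r.
rewrite (eq_bigr (fun al : {ffun 'I_m -> 'I_l.+2} => c (h' al) * \prod_(i0 < m) x 0 i0 ^+ al i0)); last first.
  by move=> al /andP[_ H]; rewrite ffunE H.
rewrite (eq_bigl (fun al : {ffun 'I_m -> 'I_l.+2} => (\sum_i (al i : nat) <= l)%N)); last first.
  move=> al /=; case: (leqP _ l) => [H|]; last by rewrite andbF.
  by rewrite (leq_trans H).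
have hal (al : {ffun 'I_m -> 'I_l.+2}) j : (\sum_i (al i : nat) <= l)%N -> (al j <= l)%N.
  move=> H; apply: leq_trans H; rewrite (bigD1 j) //= leq_addr //.
rewrite (reindex_onto h h') /=; last first.
  move=> al H; apply/ffunP => j; rewrite !ffunE; apply/val_inj => /=.
  by rewrite inordK // ltnS hal.
apply: eq_big => al.
  have -> : h' (h al) = al.
    by apply/ffunP => j; rewrite !ffunE; apply/val_inj => /=; rewrite inordK.
  rewrite eqxx andbT; congr (_ <= _)%N; apply: eq_bigr => j _; by rewrite ffunE.
move=> _; have -> : h' (h al) = al.
  by apply/ffunP => j; rewrite !ffunE; apply/val_inj => /=; rewrite inordK.
by congr (_ * _); apply: eq_bigr => j _; rewrite ffunE.
Qed.
End S.

Section S.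
Variable R : realType.

Lemma iint0 m : iint (fun _ : 'rV[R]_m => 0) = 0.
Proof.
have /andP[h1 h2] := @iint_bounds R m (fun _ => 0) 0 0 0 0 (fun _ => 0) (lexx _) (lexx _) (lexx _)
  (fun _ => lexx _) (fun _ => lexx _) (fun _ _ => erefl) (fun _ _ => lexx _).
by apply/eqP; rewrite eq_le; rewrite !mul0r in h1 h2; rewrite h1 h2.
Qed.

Lemma coord_le_enorm m (x : 'rV[R]_m) i : `|x 0 i| <= enorm x.
Proof.
rewrite /enorm -sqrtr_sqr ler_wsqrtr // /edot (bigD1 i) //= expr2 lerDl.
by apply: sumr_ge0 => j _; rewrite -expr2 sqr_ge0.
Qed.

Lemma coord_le_l1 m (x : 'rV[R]_m) i : `|x 0 i| <= \sum_j `|x 0 j|.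
Proof. by rewrite (bigD1 i) //= lerDl sumr_ge0. Qed.

Lemma enorm_le_l1 m (x : 'rV[R]_m) : enorm x <= \sum_i `|x 0 i|.
Proof.
have S0 : 0 <= \sum_i `|x 0 i| by apply: sumr_ge0.
rewrite -(ger0_norm S0) -sqrtr_sqr ler_wsqrtr // expr2 {1}/edot mulr_suml.
apply: ler_sum => i _; apply: le_trans (_ : `|x 0 i| * `|x 0 i| <= _).
  by rewrite -normrM ler_norm.
by apply: ler_wpM2l => //; apply: coord_le_l1.
Qed.

Section El.
Variables (d : nat) (E : element R d).

Lemma T_bound : polytopal_element E ->
  exists2 M : R, 0 <= M & forall x, closure (cell E) x -> forall i, `|x 0 i| <= M.
Proof.
move=> [_ [[_ [z Tz] _ [M0 HM]] _ _ _ _]].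
have M00 : 0 <= M0 by apply: le_trans (HM z Tz); rewrite /enorm sqrtr_ge0.
exists (M0 + 1); first by rewrite addr_ge0.
move=> x cx i.
have [y [Ty bxy]] := cx _ (nbhsx_ballx x 1 ltr01).
case: bxy => _ /(_ 0 i); rewrite -ball_normE /= => hxy.
have := @coord_le_enorm _ y i; have := HM y Ty.
have := ler_normD (y 0 i) (x 0 i - y 0 i); rewrite addrC subrK distrC.
rewrite distrC in hxy; lra.
Qed.


Lemma intT0 (f : 'rV[R]_d -> R) : (forall x, cell E x -> f x = 0) -> intT E f = 0.
Proof.
move=> h; rewrite /intT -[RHS](iint0 d); congr iint; apply/funext => x.
rewrite indicE; have [/set_mem Tx|_] := boolP (x \in cell E).
  by rewrite h // mulr0.
by rewrite mul0r.
Qed.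

Lemma projT_eq k (u1 : 'rV[R]_d -> R) : polytopal_element E -> poly_fun k u1 ->
  forall x, cell E x -> projT E k u1 x = u1 x.
Proof.
move=> pE pu.
have [gp go] : is_projT E k u1 (projT E k u1).
  apply: xgetPex; exists u1; split => // q _.
  by apply: intT0 => x _; rewrite subrr mul0r.
set g := projT E k u1 in gp go *.
move=> x Tx; apply/eqP; apply: contraT => hne.
pose q := fun y => u1 y - g y.
have pq : poly_fun k q by apply: poly_funB.
have H0 : iint (fun y => \1_(cell E) y * (q y * q y)) = 0 := go q pq.
have [M M0 HM] := T_bound pE.
have [K HK] := @poly_bound R d k q M pq M0.
have : 0 < iint (fun y => \1_(cell E) y * (q y * q y)).
  apply: (@iint_sq_pos R d (cell E) q M K x M0).
  - by move=> y Ty; apply: HM; apply: subset_closure.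
  - by move=> y Ty; apply: HK => i; apply: HM; apply: subset_closure.
  - exact: (@poly_comp_cont R _ d k (fun t : 'rV[R]_d => t) q x
      (fun i => @coord_continuous R 1 d 0 i x) pq).
  - by rewrite /q subr_eq0 eq_sym.
  - by case: pE => _ [[oT _ _ _] _ _ _ _]; apply: open_box.
by rewrite H0 ltxx.
Qed.
End El.
End S.

Section S.
Variable R : realType.

Lemma affine_cont m n (o : 'rV[R]_n) (fr : 'M[R]_(m, n)) (z : 'rV[R]_m) j :
  {for z, continuous (fun t : 'rV[R]_m => (o + t *m fr) 0 j)}.
Proof.
have -> : (fun t : 'rV[R]_m => (o + t *m fr) 0 j) =
   (fun=> o 0 j) + (fun t => \sum_(k < m) (fun t : 'rV[R]_m => t 0 k * fr k j) t).
  by apply/funext => t; rewrite !mxE.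
apply: continuousD; first exact: cst_continuous.
apply: cont_sum => k.
apply: (@continuousM R _ (fun t : 'rV[R]_m => t 0 k) (fun=> fr k j)).
  exact: coord_continuous.
exact: cst_continuous.
Qed.

Lemma enorm0 m : enorm (0 : 'rV[R]_m) = 0.
Proof. by rewrite /enorm /edot big1 ?sqrtr0 // => i _; rewrite mxE mul0r. Qed.


Lemma face_zero m n (o : 'rV[R]_n) (fr : 'M[R]_(m, n)) (Fs : set 'rV[R]_n)
    (q : 'rV[R]_n -> R) l M :
  poly_fun l q -> 0 <= M -> fr *m fr^T = 1%:M ->
  (forall x, Fs x -> forall k, `|x 0 k| <= M) ->
  (forall x, Fs x -> exists y, x = o + y *m fr) ->
  (exists x0, exists2 e0 : R, 0 < e0 & forall y', enorm y' < e0 -> Fs (x0 + y' *m fr)) ->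
  iint (fun y => \1_Fs (o + y *m fr) * (q (o + y *m fr) * q (o + y *m fr))) = 0 ->
  forall x, Fs x -> q x = 0.
Proof.
move=> pq M0 orth FM Fpl [x0 [e0 e00 He0]] H0 x Fx.
apply/eqP; apply: contraT => qx.
pose S := [set y | Fs (o + y *m fr)].
pose p y := q (o + y *m fr).
pose B := \sum_(j < m) \sum_(k < n) (M + `|o 0 k|) * `|fr j k|.
have B0 : 0 <= B.
  by apply: sumr_ge0 => j _; apply: sumr_ge0 => k _; rewrite mulr_ge0 // addr_ge0.
have [K HK] := @poly_bound R n l q M pq M0.
have SB y : S y -> forall j, `|y 0 j| <= B.
  move=> Sy j.
  have yE : y = (o + y *m fr - o) *m fr^T by rewrite addrC addKr -mulmxA orth mulmx1.
  have FX : Fs (o + y *m fr) := Sy.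
  move: FX yE; set X := o + y *m fr => FX yE; clearbody X.
  rewrite yE mxE; apply: le_trans (ler_norm_sum _ _ _) _.
  apply: le_trans (_ : \sum_(k < n) (M + `|o 0 k|) * `|fr j k| <= B); last first.
    rewrite /B (bigD1 j) //= lerDl; apply: sumr_ge0 => j' _; apply: sumr_ge0 => k _.
    by rewrite mulr_ge0 // addr_ge0.
  apply: ler_sum => k _; rewrite normrM !mxE; apply: ler_wpM2r => //.
  apply: le_trans (ler_normD _ _) _; rewrite normrN; apply: lerD => //.
  exact: FM.
have pK y : S y -> `|p y| <= K by move=> Sy; apply: HK; apply: FM.
have Fx0 : Fs x0 by have := He0 0; rewrite enorm0 mul0mx addr0; apply.
have [y0 y0E] := Fpl x0 Fx0.
have [y1 y1E] := Fpl x Fx.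
have [P HP] := @poly_line R n l q x0 (x - x0) pq.
have P1 : P.[1] != 0 by rewrite -HP scale1r addrC subrK.
have Pn0 : P != 0 by apply: contraNneq P1 => ->; rewrite horner0.
pose D := \sum_j `|(y1 - y0) 0 j|.
have D0 : 0 <= D by apply: sumr_ge0.
pose rho := e0 / (2 * (D + 1)).
have rho0 : 0 < rho by rewrite divr_gt0 // mulr_gt0 // ltr_pwDr.
have rhoE : rho * (D + 1) = e0 / 2.
  rewrite /rho invfM mulrA -mulrA mulVf ?mulr1 //.
  by rewrite gt_eqF // ltr_pwDr.
pose rs := [seq rho / (j.+1)%:R | j <- iota 0 (size P)].
have : has (predC (root P)) rs.
  rewrite has_predC; apply/negP => allr.
  have urs : uniq rs.
    rewrite map_inj_uniq ?iota_uniq // => a b /mulfI.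
    move=> /(_ (lt0r_neq0 rho0)) /invr_inj /eqP; rewrite eqr_nat eqSS.
    by move/eqP.
  by have := max_poly_roots Pn0 allr urs; rewrite size_map size_iota ltnn.
case/hasP => t0 /mapP [j _ ->] {t0} /= Pt.
set t := rho / (j.+1)%:R in Pt.
have t0 : 0 < t by rewrite divr_gt0.
have tle : t <= rho.
  rewrite ler_pdivrMr ?ltr0Sn // ler_peMr // ?ler1n //; exact: ltW.
pose z := y0 + t *: (y1 - y0).
have zE : o + z *m fr = x0 + t *: (x - x0).
  rewrite y0E y1E /z mulmxDl -scalemxAl mulmxBl addrA; congr (_ + _ *: _).
  by rewrite opprD addrACA subrr add0r.
have pz : p z != 0 by rewrite /p zE HP.
pose r := e0 / (2 * (m.+1)%:R).
have r0 : 0 < r by rewrite divr_gt0 // mulr_gt0 // ltr0Sn.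
have rE : r * (m.+1)%:R = e0 / 2.
  by rewrite /r invfM mulrA -mulrA mulVf ?mulr1 // pnatr_eq0.
have box (y : 'rV[R]_m) : (forall j, `|y 0 j - z 0 j| <= r) -> S y.
  move=> hy; rewrite /S /=.
  have -> : o + y *m fr = x0 + (y - y0) *m fr.
    by rewrite y0E mulmxBl -addrA [y0 *m fr + _]addrC subrK.
  apply: He0; apply: le_lt_trans (@enorm_le_l1 R _ (y - y0)) _.
  have Sle : \sum_j `|(y - y0) 0 j| <= r * m%:R + t * D.
    rewrite /D mulr_sumr -[r * m%:R](_ : \sum_(j < m) r = _); last first.
      by rewrite sumr_const card_ord mulr_natr.
    rewrite -big_split; apply: ler_sum => k _ /=.
    have -> : (y - y0) 0 k = (y 0 k - z 0 k) + t * (y1 - y0) 0 k.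
      by rewrite /z !mxE; ring.
    apply: le_trans (ler_normD _ _) _; apply: lerD => //.
    by rewrite normrM ger0_norm // ltW.
  have h1 : r * m%:R < e0 / 2.
    by rewrite -rE ltr_pM2l // ltr_nat.
  have h2 : t * D <= rho * D by apply: ler_wpM2r.
  have h3 : rho * D < e0 / 2 by rewrite -rhoE ltr_pM2l // ltrDl.
  lra.
have IE : (fun y => \1_S y * (p y * p y)) =
    (fun y => \1_Fs (o + y *m fr) * (q (o + y *m fr) * q (o + y *m fr))).
  apply/funext => y; rewrite !indicE /p.
  have -> : (y \in S) = (o + y *m fr \in Fs) by apply/idP/idP => /set_mem h; apply: mem_set.
  by [].
have := @iint_sq_pos R m S p B K z B0 SB pK
  (@poly_comp_cont R _ n l (fun y : 'rV[R]_m => o + y *m fr) q z (fun j => @affine_cont m n o fr z j) pq)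
  pz (ex_intro2 _ _ r r0 box).
by rewrite IE H0 ltxx.
Qed.
End S.

Section S.
Variables (R : realType) (d : nat) (E : element R d).

Lemma projF_eq k (u1 : 'rV[R]_d -> R) : polytopal_element E -> poly_fun k u1 ->
  forall i x, fset E i x -> projF i k u1 x = u1 x.
Proof.
move=> pE pu i.
have [gp go] : is_projF i k u1 (projF i k u1).
  apply: xgetPex; exists u1; split => // q _.
  rewrite /intF -[RHS](iint0 R d.-1); congr iint; apply/funext => y /=.
  by rewrite subrr mul0r mulr0.
set g := projF i k u1 in gp go *.
pose q := fun y => u1 y - g y.
have pq : poly_fun k q by apply: poly_funB.
have [M M0 HM] := @T_bound R d E pE.
case: pE => _ [_ /(_ i) [orth _ _ [Fpl _ _ [x0 relx0]]] clos _ _].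
have FM x : fset E i x -> forall k, `|x 0 k| <= M.
  move=> Fx; apply: HM.
  have : (\bigcup_(j in [set: 'I_(nf E)]) fset E j) x by exists i.
  by rewrite -clos => -[].
have Fpl' x : fset E i x -> exists y, x = forig E i + y *m fframe E i.
  by move=> /Fpl [y _ <-]; exists y.
have H0 : iint (fun y => \1_(fset E i) (forig E i + y *m fframe E i) *
   (q (forig E i + y *m fframe E i) * q (forig E i + y *m fframe E i))) = 0 := go q pq.
move=> x Fx.
have := @face_zero R d.-1 d (forig E i) (fframe E i) (fset E i) q k M pq M0 orth FM Fpl'
  (ex_intro _ x0 relx0) H0 x Fx.
by rewrite /q => /eqP; rewrite subr_eq0 => /eqP ->.
Qed.

Lemma intT_local (f f' : 'rV[R]_d -> R) : (forall x, cell E x -> f x = f' x) ->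
  intT E f = intT E f'.
Proof.
move=> h; rewrite /intT; congr iint; apply/funext => x.
rewrite indicE; have [/set_mem Tx|_] := boolP (x \in cell E).
  by rewrite h.
by rewrite !mul0r.
Qed.

Lemma intF_local i (f f' : 'rV[R]_d -> R) : (forall x, fset E i x -> f x = f' x) ->
  intF i f = intF i f'.
Proof.
move=> h; rewrite /intF; congr iint; apply/funext => y /=.
rewrite indicE; have [/set_mem Tx|_] := boolP (_ \in fset E i).
  by rewrite h.
by rewrite !mul0r.
Qed.

Definition agree_hho (v v' : hho E) :=
  (forall x, cell E x -> v.1 x = v'.1 x) /\ (forall i x, fset E i x -> v.2 i x = v'.2 i x).

Lemma pT_local k (v v' : hho E) : agree_hho v v' -> pT k v = pT k v'.
Proof.
move=> [h1 h2]; rewrite /pT; congr xget; apply/funext => p; apply/propext.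
have e1 w : intT E (fun x => v.1 x * lap w x) = intT E (fun x => v'.1 x * lap w x).
  by apply: intT_local => x Tx; rewrite h1.
have e2 w : \sum_(i < nf E) intF i (fun x => v.2 i x * edot (grad w x) (fnormal E i)) =
    \sum_(i < nf E) intF i (fun x => v'.2 i x * edot (grad w x) (fnormal E i)).
  by apply: eq_bigr => i _; apply: intF_local => x Fx; rewrite h2.
have e3 : intT E (fun x => p x - v.1 x) = intT E (fun x => p x - v'.1 x).
  by apply: intT_local => x Tx; rewrite h1.
split => -[a b c]; split => //.
- by move=> w pw; rewrite b // e1 e2.
- by rewrite -e3.
- by move=> w pw; rewrite b // e1 e2.
- by rewrite e3.
Qed.

Lemma projT_local k (f f' : 'rV[R]_d -> R) : (forall x, cell E x -> f x = f' x) ->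
  projT E k f = projT E k f'.
Proof.
move=> h; rewrite /projT; congr xget; apply/funext => g; apply/propext.
have e q : intT E (fun x => (f x - g x) * q x) = intT E (fun x => (f' x - g x) * q x).
  by apply: intT_local => x Tx; rewrite h.
by split => -[a b]; split => // q pq; [rewrite -e | rewrite e]; exact: b.
Qed.

Lemma projF_local k i (f f' : 'rV[R]_d -> R) : (forall x, fset E i x -> f x = f' x) ->
  projF i k f = projF i k f'.
Proof.
move=> h; rewrite /projF; congr xget; apply/funext => g; apply/propext.
have e q : intF i (fun x => (f x - g x) * q x) = intF i (fun x => (f' x - g x) * q x).
  by apply: intF_local => x Tx; rewrite h.
by split => -[a b]; split => // q pq; [rewrite -e | rewrite e]; exact: b.
Qed.

Lemma agree_same k (v v' : hho E) : agree_hho v v' -> same_residuals k v v'.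
Proof.
move=> [h1 h2]; have hp := @pT_local k v v' (conj h1 h2).
rewrite /same_residuals /deltaT /deltaTF hp; split.
  by move=> x Tx; rewrite (@projT_local k _ (fun x => pT k v' x - v'.1 x)) // => y Ty; rewrite h1.
by move=> i x Fx; rewrite (@projF_local k i _ (fun x => pT k v' x - v'.2 i x)) // => y Fy; rewrite h2.
Qed.

End S.

Definition cvec_hho {R : realType} {d : nat} {E : element R d} (u : hho E) : hho E :=
  (u.1, fun _ => u.1).

Theorem proposition3 (R : realType) (d : nat) (E : element R d) (k : nat)
    (s : hho E -> hho E -> R) :
  polytopal_element E ->
  bilinear_on k s -> S1 k s -> S2 k s -> S3 k s ->
  residual_dependent k s ->
  forall u v : hho E, inU k u -> inU k v ->
    s u v = s (zero_bdiff u) (zero_bdiff v).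
Proof.
move=> pE [bl br] [sym _] _ s3 rd.
have cvU (u : hho E) : inU k u -> inU k (cvec_hho u) by move=> [h _]; split.
have zbU (u : hho E) : inU k u -> inU k (zero_bdiff u).
  move=> [h1 h2]; split; first exact: poly_fun0.
  by move=> i; apply: poly_funB.
have dec (u : hho E) : u = hho_add (hho_scale 1 (cvec_hho u)) (zero_bdiff u).
  case: u => u1 u2; rewrite /hho_add /hho_scale /zero_bdiff /bdiff /=.
  congr pair; apply/funext => x //=; first by rewrite mul1r addr0.
  by apply/funext => y; rewrite mul1r addrC subrK.
have cv0 u w : inU k u -> inU k w -> s (cvec_hho u) w = 0.
  move=> [hu1 hu2] hw.
  have iU : inU k (interp E k u.1).
    split.
      by have [] : is_projT E k u.1 (projT E k u.1) by apply: xgetPex; exists u.1; split => // q _; apply: intT0 => x _; rewrite subrr mul0r.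
    move=> i.
    have [] // : is_projF i k u.1 (projF i k u.1).
    apply: xgetPex; exists u.1; split => // q _.
    rewrite /intF -[RHS](iint0 R d.-1); congr iint; apply/funext => y /=.
    by rewrite subrr mul0r mulr0.
  rewrite (rd _ (interp E k u.1) w w) //; first by apply: s3 => //; apply: poly_funS.
  apply: agree_same; split => /=.
    by move=> x Tx; rewrite projT_eq.
  by move=> i x Fx; rewrite projF_eq.
move=> u v uU vU.
rewrite {1}(dec u) bl; [|exact: cvU|exact: zbU|by []].
rewrite (cv0 u v uU vU) mulr0 add0r.
rewrite {1}(dec v) br; [|exact: zbU|exact: cvU|exact: zbU].
rewrite (sym _ (cvec_hho v)); [|exact: zbU|exact: cvU].
by rewrite (cv0 v _ vU (zbU u uU)) mulr0 add0r.
Qed.
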